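(* Let $f:\mathbb R\to\mathbb C$ be defined by $f(t)=\sum_{m=1}^{\infty}\frac{1}{m!}e^{i2^{-m}t}$. Then $f$ is smooth, its Taylor series at $0$ has infinite radius of convergence and converges to $f(t)$ for every $t\in\mathbb R$, and for every $t\in\mathbb R$ the series $\hat f(t)$ converges with $\hat f(t)=f(0)=e-1$.
   Context: For a smooth (possibly complex-valued) function $f$ and a point $t$, $\hat f(t)$ denotes the series $\hat f(t):=\sum_{n=0}^{\infty}\frac{(-1)^n}{n!}\,t^n f^{(n)}(t)$ and also its sum when it converges. *)

(* Defs.v *)
(* classical reals. Complex numbers are represented by
   (real part, imaginary part) pairs of real-valued functions. *)
From Stdlib Require Import Reals Arith.
Open Scope R_scope.

(* m-th term (m >= 1, written m = k+1) of Re f(t) and Im f(t), where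
   f(t) = sum_{m>=1} (1/m!) e^{i 2^{-m} t}. *)
Definition f_re_term (t : R) (k : nat) : R :=
  cos (t / 2 ^ (S k)) / INR (fact (S k)).
Definition f_im_term (t : R) (k : nat) : R :=
  sin (t / 2 ^ (S k)) / INR (fact (S k)).

(* D is a sequence of successive derivatives: D (S n) = (D n)' everywhere.
   A complex-valued function of a real variable u = ur + i ui is smooth iff
   such sequences exist for ur and ui (with Dr 0 = ur, Di 0 = ui). *)
Definition derivative_tower (D : nat -> R -> R) : Prop :=
  forall (n : nat) (t : R), derivable_pt_lim (D n) t (D (S n) t).

Definition cmod (a b : R) : R := sqrt (a ^ 2 + b ^ 2).

(* Main.v *)
Require Import Defs.
From Stdlib Require Import Reals Arith Lra Lia ClassicalEpsilon FunctionalExtensionality.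
Open Scope R_scope.


Lemma is_ext (u v : nat -> R) l : (forall n, u n = v n) -> infinite_sum u l -> infinite_sum v l.
Proof.
  intros He H eps Heps. destruct (H eps Heps) as [N HN]. exists N. intros n Hn.
  rewrite <- (sum_eq u v n) by (intros; apply He). auto.
Qed.

Lemma is_scal (u : nat -> R) l c : infinite_sum u l -> infinite_sum (fun n => u n * c) (l * c).
Proof.
  intros H. assert (Un_cv (fun N => sum_f_R0 u N * c) (l * c)).
  { apply CV_mult; [exact H|]. intros e He; exists 0%nat; intros; unfold Rdist; rewrite Rminus_diag, Rabs_R0; lra. }
  intros eps Heps. destruct (H0 eps Heps) as [N HN]. exists N. intros n Hn.
  rewrite <- scal_sum. rewrite Rmult_comm. auto.
Qed.

Lemma is_scal_l (u : nat -> R) l c : infinite_sum u l -> infinite_sum (fun n => c * u n) (c * l).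
Proof.
  intros H. rewrite Rmult_comm. apply is_ext with (fun n => u n * c). intros; ring.
  apply is_scal; auto.
Qed.

Lemma is_plus (u v : nat -> R) a b : infinite_sum u a -> infinite_sum v b ->
  infinite_sum (fun n => u n + v n) (a + b).
Proof.
  intros Hu Hv. assert (H := CV_plus _ _ _ _ Hu Hv).
  intros eps Heps. destruct (H eps Heps) as [N HN]. exists N. intros n Hn.
  rewrite sum_plus. auto.
Qed.

Lemma is_minus (u v : nat -> R) a b : infinite_sum u a -> infinite_sum v b ->
  infinite_sum (fun n => u n - v n) (a - b).
Proof.
  intros Hu Hv. unfold Rminus. apply is_plus; auto.
  apply is_ext with (fun n => v n * -1). intros; ring.
  replace (-b) with (b * -1) by ring. apply is_scal; auto.
Qed.

Lemma is_shift (u : nat -> R) l : infinite_sum u l -> infinite_sum (fun k => u (S k)) (l - u 0%nat).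
Proof.
  intros H eps Heps. destruct (H eps Heps) as [N HN]. exists N. intros n Hn.
  assert (E : sum_f_R0 (fun k => u (S k)) n = sum_f_R0 u (S n) - u 0%nat).
  { rewrite (decomp_sum u (S n)) by lia. simpl pred. ring. }
  rewrite E. unfold Rdist. replace (sum_f_R0 u (S n) - u 0%nat - (l - u 0%nat)) with (sum_f_R0 u (S n) - l) by ring.
  apply HN. lia.
Qed.

Lemma lim_abs_le (s : nat -> R) l M N : Un_cv s l -> (forall n, (N <= n)%nat -> Rabs (s n) <= M) -> Rabs l <= M.
Proof.
  intros H HM. destruct (Rle_or_lt (Rabs l) M) as [|Hlt]; auto. exfalso.
  destruct (H (Rabs l - M)) as [N1 HN1]; [lra|].
  specialize (HN1 (max N N1) ltac:(lia)). specialize (HM (max N N1) ltac:(lia)).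
  unfold Rdist in HN1.
  assert (T := Rabs_triang (l - s (max N N1)) (s (max N N1))).
  replace (l - s (max N N1) + s (max N N1)) with l in T by ring.
  rewrite Rabs_minus_sym in HN1. lra.
Qed.

Lemma diff_bound (u v : nat -> R) : (forall n, Rabs (u n) <= v n) -> forall m d,
  Rabs (sum_f_R0 u (m + d) - sum_f_R0 u m) <= sum_f_R0 v (m + d) - sum_f_R0 v m.
Proof.
  intros Hb m d. induction d.
  - rewrite Nat.add_0_r. rewrite !Rminus_diag, Rabs_R0. lra.
  - rewrite <- plus_n_Sm. rewrite !tech5.
    replace (sum_f_R0 u (m + d) + u (S (m + d)) - sum_f_R0 u m) with
      ((sum_f_R0 u (m + d) - sum_f_R0 u m) + u (S (m + d))) by ring.
    eapply Rle_trans; [apply Rabs_triang|]. specialize (Hb (S (m+d))). lra.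
Qed.

Lemma nonneg_of_bound (u v : nat -> R) : (forall n, Rabs (u n) <= v n) -> forall n, 0 <= v n.
Proof. intros H n. eapply Rle_trans; [apply Rabs_pos|apply H]. Qed.

Lemma is_compare (u v : nat -> R) V : (forall n, Rabs (u n) <= v n) -> infinite_sum v V ->
  exists l, infinite_sum u l.
Proof.
  intros Hb Hv.
  assert (C : Cauchy_crit_series v) by (apply cv_cauchy_1; exists V; exact Hv).
  assert (C2 : Cauchy_crit_series u).
  { intros eps Heps. destruct (C eps Heps) as [N HN]. exists N. intros n m Hn Hm.
    unfold Rdist in *. specialize (HN n m Hn Hm).
    destruct (le_lt_dec m n) as [Hmn|Hmn].
    - replace n with (m + (n - m))%nat by lia.
      replace n with (m + (n - m))%nat in HN by lia.
      eapply Rle_lt_trans; [apply diff_bound; auto|].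
      eapply Rle_lt_trans; [apply Rle_abs|]. auto.
    - rewrite Rabs_minus_sym. rewrite Rabs_minus_sym in HN.
      replace m with (n + (m - n))%nat by lia.
      replace m with (n + (m - n))%nat in HN by lia.
      eapply Rle_lt_trans; [apply diff_bound; auto|].
      eapply Rle_lt_trans; [apply Rle_abs|]. auto. }
  destruct (cv_cauchy_2 u C2) as [l Hl]. exists l. exact Hl.
Qed.

Lemma sum_le_lim (v : nat -> R) V N : (forall n, 0 <= v n) -> infinite_sum v V -> sum_f_R0 v N <= V.
Proof. intros. apply sum_incr; auto. Qed.

Lemma is_abs_le (u v : nat -> R) U V : (forall n, Rabs (u n) <= v n) -> infinite_sum u U -> infinite_sum v V ->
  Rabs U <= V.
Proof.
  intros Hb Hu Hv. apply (sum_cv_maj v (fun k _ => u k) 0 U V); auto.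
Qed.

Lemma tail_bound (u v : nat -> R) U V N : (forall n, Rabs (u n) <= v n) -> infinite_sum u U -> infinite_sum v V ->
  Rabs (U - sum_f_R0 u N) <= V - sum_f_R0 v N.
Proof.
  intros Hb Hu Hv.
  assert (Hc : Un_cv (fun M => sum_f_R0 u M - sum_f_R0 u N) (U - sum_f_R0 u N)).
  { apply CV_minus; [exact Hu|]. intros e He; exists 0%nat; intros; unfold Rdist; rewrite Rminus_diag, Rabs_R0; lra. }
  apply (lim_abs_le _ _ _ N Hc). intros n Hn.
  replace n with (N + (n - N))%nat by lia.
  eapply Rle_trans; [apply diff_bound; auto|].
  assert (sum_f_R0 v (N + (n - N)) <= V) by (apply sum_le_lim; auto; apply (nonneg_of_bound u); auto).
  lra.
Qed.

Lemma is_finite_sum (a : nat -> nat -> R) (D : nat -> R) N :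
  (forall n, infinite_sum (fun k => a k n) (D n)) ->
  infinite_sum (fun k => sum_f_R0 (fun n => a k n) N) (sum_f_R0 D N).
Proof.
  intros H. induction N.
  - simpl. apply H.
  - simpl. apply (is_plus _ _ _ _ IHN (H (S N))).
Qed.

Lemma exchange (a : nat -> nat -> R) (b c A D : nat -> R) B C L :
  (forall k n, Rabs (a k n) <= b k * c n) -> (forall n, 0 <= c n) -> (forall k, 0 <= b k) ->
  infinite_sum b B -> infinite_sum c C ->
  (forall k, infinite_sum (fun n => a k n) (A k)) ->
  (forall n, infinite_sum (fun k => a k n) (D n)) ->
  infinite_sum A L -> infinite_sum D L.
Proof.
  intros Hab Hc Hb HB HC HA HD HL eps Heps.
  assert (B0 : 0 <= B) by (eapply Rle_trans; [apply (Hb 0%nat)|]; apply (sum_le_lim b B 0); auto).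
  destruct (HC (eps / (B + 1))) as [N0 HN0].
  { apply Rdiv_lt_0_compat; lra. }
  exists N0. intros N HN.
  specialize (HN0 N HN). unfold Rdist in *.
  assert (SC : sum_f_R0 c N <= C) by (apply sum_le_lim; auto).
  rewrite Rabs_left1 in HN0 by lra.
  set (e := fun k => sum_f_R0 (fun n => a k n) N).
  assert (He : infinite_sum e (sum_f_R0 D N)) by (apply is_finite_sum; auto).
  assert (Hdiff := is_minus _ _ _ _ HL He).
  assert (Hbnd : forall k, Rabs (A k - e k) <= b k * (C - sum_f_R0 c N)).
  { intros k. unfold e.
    replace (b k * (C - sum_f_R0 c N)) with (b k * C - sum_f_R0 (fun n => c n * b k) N)
      by (rewrite <- scal_sum; ring).
    apply (tail_bound (fun n => a k n) (fun n => c n * b k)).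
    - intros n. rewrite Rmult_comm. auto.
    - apply HA.
    - rewrite Rmult_comm. apply is_scal. auto. }
  assert (HBs : infinite_sum (fun k => b k * (C - sum_f_R0 c N)) (B * (C - sum_f_R0 c N))) by (apply is_scal; auto).
  assert (T := is_abs_le _ _ _ _ Hbnd Hdiff HBs).
  rewrite Rabs_minus_sym.
  eapply Rle_lt_trans; [exact T|].
  apply Rle_lt_trans with (B * (eps / (B + 1))).
  - apply Rmult_le_compat_l; lra.
  - unfold Rdiv. rewrite <- Rmult_assoc. apply Rmult_lt_reg_r with (B + 1); [lra|].
    rewrite Rmult_assoc, Rinv_l by lra. lra.
Qed.


Lemma exp_is (x : R) : infinite_sum (fun n => x ^ n / INR (fact n)) (exp x).
Proof.
  unfold exp. destruct (exist_exp x) as [l Hl]. simpl. unfold exp_in in Hl.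
  apply is_ext with (fun i => / INR (fact i) * x ^ i); auto. intros; unfold Rdiv; ring.
Qed.

Lemma E_is : infinite_sum (fun k => / INR (fact (S k))) (exp 1 - 1).
Proof.
  assert (H := is_shift _ _ (exp_is 1)). simpl in H.
  apply is_ext with (fun k => 1 ^ S k / INR (fact (S k))).
  - intros. rewrite pow1. unfold Rdiv; ring.
  - replace (exp 1 - 1) with (exp 1 - 1 / 1) by field. exact H.
Qed.

Lemma cos_kPI q k : cos (q + INR k * PI) = (-1) ^ k * cos q.
Proof.
  induction k.
  - simpl. rewrite Rmult_0_l, Rplus_0_r. ring.
  - rewrite S_INR. replace (q + (INR k + 1) * PI) with ((q + INR k * PI) + PI) by ring.
    rewrite neg_cos, IHk. simpl; ring.
Qed.

Lemma sin_kPI q k : sin (q + INR k * PI) = (-1) ^ k * sin q.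
Proof.
  induction k.
  - simpl. rewrite Rmult_0_l, Rplus_0_r. ring.
  - rewrite S_INR. replace (q + (INR k + 1) * PI) with ((q + INR k * PI) + PI) by ring.
    rewrite neg_sin, IHk. simpl; ring.
Qed.

Lemma cos_series (x : R) : infinite_sum (fun i => cos_n i * (x * x) ^ i) (cos x).
Proof.
  unfold cos. destruct (exist_cos (Rsqr x)) as [l Hl]. exact Hl.
Qed.

Lemma sin_series (x : R) : infinite_sum (fun i => x * (sin_n i * (x * x) ^ i)) (sin x).
Proof.
  unfold sin. destruct (exist_sin (Rsqr x)) as [l Hl]. apply is_scal_l. exact Hl.
Qed.

Lemma sum_scal_l (u : nat -> R) c N : sum_f_R0 (fun i => c * u i) N = c * sum_f_R0 u N.
Proof. rewrite scal_sum. apply sum_eq. intros; ring. Qed.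

Lemma even_odd_cv (s : nat -> R) L : Un_cv (fun N => s (2 * N + 1)%nat) L ->
  Un_cv (fun N => s (2 * N)%nat) L -> Un_cv s L.
Proof.
  intros Ho He eps Heps. destruct (Ho eps Heps) as [N1 H1]. destruct (He eps Heps) as [N2 H2].
  exists (2 * (N1 + N2) + 1)%nat. intros n Hn. destruct (even_odd_cor n) as [p [Hp|Hp]]; subst n.
  - apply H2. lia.
  - replace (S (2 * p)) with (2 * p + 1)%nat by lia. apply H1. lia.
Qed.

Lemma trig_taylor q x : infinite_sum (fun n => cos (q + INR n * (PI / 2)) / INR (fact n) * x ^ n) (cos (q + x)).
Proof.
  set (u := fun n => cos (q + INR n * (PI / 2)) / INR (fact n) * x ^ n).
  assert (Hev : forall k, u (2 * k)%nat = cos q * (cos_n k * (x * x) ^ k)).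
  { intros k. unfold u, cos_n. rewrite mult_INR. simpl (INR 2).
    replace (q + (1 + 1) * INR k * (PI / 2)) with (q + INR k * PI) by field.
    rewrite cos_kPI. rewrite pow_mult. simpl (x ^ 2). unfold Rdiv. rewrite Rmult_1_r. ring. }
  assert (Hod : forall k, u (2 * k + 1)%nat = - sin q * (x * (sin_n k * (x * x) ^ k))).
  { intros k. unfold u, sin_n. rewrite plus_INR, mult_INR. simpl (INR 2). simpl (INR 1).
    replace (q + ((1 + 1) * INR k + 1) * (PI / 2)) with ((q + INR k * PI) + PI / 2) by field.
    rewrite cos_plus, cos_PI2, sin_PI2, sin_kPI. rewrite pow_add, pow_mult. simpl (x ^ 2). simpl (x ^ 1).
    rewrite !Rmult_1_r. unfold Rdiv. ring. }
  assert (Hsum : forall N, sum_f_R0 u (2 * N + 1) =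
     cos q * sum_f_R0 (fun i => cos_n i * (x * x) ^ i) N - sin q * sum_f_R0 (fun i => x * (sin_n i * (x * x) ^ i)) N).
  { induction N.
    - simpl. assert (A0 := Hev 0%nat). assert (A1 := Hod 0%nat). simpl in A0, A1. rewrite A0, A1. ring.
    - replace (2 * S N + 1)%nat with (S (S (2 * N + 1))) by lia.
      rewrite !tech5. rewrite IHN.
      replace (S (S (2 * N + 1))) with (2 * S N + 1)%nat by lia.
      replace (S (2 * N + 1)) with (2 * S N)%nat by lia.
      rewrite Hev, Hod. ring. }
  assert (Hodd : Un_cv (fun N => sum_f_R0 u (2 * N + 1)) (cos (q + x))).
  { rewrite cos_plus.
    assert (H1 := is_scal_l _ _ (cos q) (cos_series x)).
    assert (H2 := is_scal_l _ _ (sin q) (sin_series x)).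
    assert (H3 := CV_minus _ _ _ _ H1 H2).
    intros e He. destruct (H3 e He) as [N HN]. exists N. intros n Hn.
    specialize (HN n Hn). cbv beta in HN. rewrite !sum_scal_l in HN. rewrite Hsum, !sum_scal_l. exact HN. }
  assert (Hu0 : Un_cv u 0).
  { intros e He. destruct (cv_speed_pow_fact (Rabs x) e He) as [N HN]. exists N. intros n Hn.
    specialize (HN n Hn). unfold Rdist in *. rewrite Rminus_0_r in *.
    eapply Rle_lt_trans; [|exact HN].
    rewrite (Rabs_right (Rabs x ^ n / INR (fact n))).
    2:{ apply Rle_ge. unfold Rdiv. apply Rmult_le_pos. apply pow_le, Rabs_pos.
        left. apply Rinv_0_lt_compat, INR_fact_lt_0. }
    unfold u. rewrite !Rabs_mult. unfold Rdiv. rewrite Rabs_mult. rewrite RPow_abs.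
    rewrite (Rabs_right (/ INR (fact n))).
    2:{ left. apply Rinv_0_lt_compat, INR_fact_lt_0. }
    assert (Rabs (cos (q + INR n * (PI / 2))) <= 1) by (apply Rabs_le, COS_bound).
    assert (0 <= / INR (fact n) * Rabs (x ^ n)).
    { apply Rmult_le_pos. left; apply Rinv_0_lt_compat, INR_fact_lt_0. apply Rabs_pos. }
    assert (0 <= Rabs (cos (q + INR n * (PI / 2)))) by apply Rabs_pos.
    nra. }
  apply even_odd_cv; auto.
  intros e He. destruct (Hodd (e/2)) as [N1 H1]; [lra|]. destruct (Hu0 (e/2)) as [N2 H2]; [lra|].
  exists (N1 + N2)%nat. intros n Hn. specialize (H1 n ltac:(lia)). specialize (H2 (2 * n + 1)%nat ltac:(lia)).
  unfold Rdist in *.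
  replace (2 * n + 1)%nat with (S (2 * n)) in H1, H2 by lia. rewrite tech5 in H1.
  rewrite Rminus_0_r in H2.
  assert (T := Rabs_triang (sum_f_R0 u (2 * n) + u (S (2 * n)) - cos (q + x)) (- u (S (2 * n)))).
  rewrite Rabs_Ropp in T.
  replace (sum_f_R0 u (2 * n) + u (S (2 * n)) - cos (q + x) + - u (S (2 * n))) with (sum_f_R0 u (2 * n) - cos (q + x)) in T by ring.
  lra.
Qed.


Lemma deriv_ext f g x l l' : (forall y, f y = g y) -> l = l' -> derivable_pt_lim f x l -> derivable_pt_lim g x l'.
Proof.
  intros H Hl D. assert (f = g) by (apply functional_extensionality; auto). subst. auto.
Qed.

Lemma dcos_lin a r K t : derivable_pt_lim (fun t => cos (a * t + r) * K) t (- sin (a * t + r) * a * K).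
Proof.
  assert (H1 : derivable_pt_lim (fun t => a * t + r) t a).
  { apply (deriv_ext (mult_real_fct a id + fct_cte r)%F _ _ (a * 1 + 0)).
    - intros; reflexivity.
    - ring.
    - apply derivable_pt_lim_plus. apply derivable_pt_lim_scal, derivable_pt_lim_id. apply derivable_pt_lim_const. }
  assert (H2 := derivable_pt_lim_comp _ cos t a (- sin (a * t + r)) H1 (derivable_pt_lim_cos _)).
  assert (H3 := derivable_pt_lim_mult _ (fct_cte K) t _ 0 H2 (derivable_pt_lim_const K t)).
  eapply deriv_ext; [| |exact H3].
  - intros; reflexivity.
  - unfold comp, fct_cte. ring.
Qed.

Definition term (p : R) (n : nat) (t : R) (k : nat) : R :=
  cos (t / 2 ^ S k + INR n * (PI / 2) + p) / (2 ^ S k) ^ n / INR (fact (S k)).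

Definition bnd (k : nat) : R := / INR (fact (S k)).

Lemma bnd_pos k : 0 <= bnd k.
Proof. unfold bnd. left. apply Rinv_0_lt_compat, INR_fact_lt_0. Qed.

Lemma pow2_ge1 k n : 1 <= (2 ^ S k) ^ n.
Proof. apply pow_R1_Rle. apply pow_R1_Rle. lra. Qed.

Lemma term_bound p n t k : Rabs (term p n t k) <= bnd k * / (2 ^ S k) ^ n.
Proof.
  unfold term, bnd, Rdiv. rewrite !Rabs_mult.
  assert (Hc : Rabs (cos (t * / 2 ^ S k + INR n * (PI * / 2) + p)) <= 1) by (apply Rabs_le, COS_bound).
  assert (H1 := pow2_ge1 k n).
  rewrite (Rabs_right (/ (2 ^ S k) ^ n)) by (left; apply Rinv_0_lt_compat; lra).
  rewrite (Rabs_right (/ INR (fact (S k)))) by (left; apply Rinv_0_lt_compat, INR_fact_lt_0).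
  assert (0 < / INR (fact (S k))) by (apply Rinv_0_lt_compat, INR_fact_lt_0).
  assert (0 < / (2 ^ S k) ^ n) by (apply Rinv_0_lt_compat; lra).
  assert (0 <= Rabs (cos (t * / 2 ^ S k + INR n * (PI * / 2) + p))) by apply Rabs_pos.
  assert (0 <= (1 - Rabs (cos (t * / 2 ^ S k + INR n * (PI * / 2) + p))) * (/ (2 ^ S k) ^ n * / INR (fact (S k)))).
  { apply Rmult_le_pos; nra. }
  nra.
Qed.

Lemma term_bound1 p n t k : Rabs (term p n t k) <= bnd k.
Proof.
  eapply Rle_trans; [apply term_bound|].
  assert (H1 := pow2_ge1 k n). assert (H2 := bnd_pos k).
  assert (/ (2 ^ S k) ^ n <= 1).
  { rewrite <- Rinv_1. apply Rinv_le_contravar; lra. }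
  nra.
Qed.

Lemma bnd_is : infinite_sum bnd (exp 1 - 1).
Proof. exact E_is. Qed.

Definition ssum (u : nat -> R) : R := epsilon (inhabits 0) (fun l => infinite_sum u l).

Lemma ssum_spec u : (exists l, infinite_sum u l) -> infinite_sum u (ssum u).
Proof. intros H. unfold ssum. apply epsilon_spec. exact H. Qed.

Definition Sf (n : nat) (p t : R) : R := ssum (term p n t).

Lemma Sf_spec n p t : infinite_sum (term p n t) (Sf n p t).
Proof.
  apply ssum_spec. apply (is_compare _ bnd (exp 1 - 1)); [apply term_bound1|apply bnd_is].
Qed.

Lemma Sf_bound n p t : Rabs (Sf n p t) <= exp 1 - 1.
Proof. apply (is_abs_le _ bnd _ _ (term_bound1 p n t) (Sf_spec n p t) bnd_is). Qed.

Lemma term_deriv p n k t : derivable_pt_lim (fun t => term p n t k) t (term p (S n) t k).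
Proof.
  set (c := 2 ^ S k).
  assert (Hc : 0 < c) by (apply pow_lt; lra).
  assert (H := dcos_lin (/ c) (INR n * (PI / 2) + p) (/ c ^ n / INR (fact (S k))) t).
  eapply deriv_ext; [| |exact H].
  - intros y. unfold term. fold c. unfold Rdiv. replace (y * / c + INR n * (PI * / 2) + p) with (/ c * y + (INR n * (PI * / 2) + p)) by ring.
    ring.
  - unfold term. fold c. rewrite S_INR.
    replace (t / c + (INR n + 1) * (PI / 2) + p) with ((/ c * t + (INR n * (PI / 2) + p)) + PI / 2) by (unfold Rdiv; ring).
    rewrite cos_plus, cos_PI2, sin_PI2. simpl pow.
    assert (INR (fact (S k)) <> 0) by apply INR_fact_neq_0.
    assert (c ^ n <> 0) by (apply pow_nonzero; lra).
    field. repeat split; auto; lra.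
Qed.

Lemma partial_deriv p n N t :
  derivable_pt_lim (fun t => sum_f_R0 (fun k => term p n t k) N) t (sum_f_R0 (fun k => term p (S n) t k) N).
Proof.
  induction N.
  - simpl. apply term_deriv.
  - simpl. apply (derivable_pt_lim_plus (fun t => sum_f_R0 (fun k => term p n t k) N) (fun t => term p n t (S N))).
    + exact IHN.
    + apply term_deriv.
Qed.

Lemma Sf_deriv p n t : derivable_pt_lim (Sf n p) t (Sf (S n) p t).
Proof.
  assert (Hd : 0 < Rabs t + 1) by (assert (0 <= Rabs t) by apply Rabs_pos; lra).
  set (d := mkposreal _ Hd).
  apply (CVU_derivable (fun N t => sum_f_R0 (fun k => term p n t k) N)
                       (fun N t => sum_f_R0 (fun k => term p (S n) t k) N)
                       (Sf n p) (Sf (S n) p) 0 d).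
  - intros eps Heps. destruct (bnd_is eps Heps) as [N HN]. exists N. intros m y Hm _.
    specialize (HN m Hm). unfold Rdist in HN.
    eapply Rle_lt_trans.
    + apply (tail_bound _ bnd _ _ m (term_bound1 p (S n) y) (Sf_spec (S n) p y) bnd_is).
    + assert (sum_f_R0 bnd m <= exp 1 - 1) by (apply sum_le_lim; [apply bnd_pos|apply bnd_is]).
      rewrite Rabs_left1 in HN by lra. lra.
  - intros x _. apply Sf_spec.
  - intros m x _. apply partial_deriv.
  - unfold Boule. simpl. rewrite Rminus_0_r. lra.
Qed.


Lemma fact_inv_pos n : 0 < / INR (fact n).
Proof. apply Rinv_0_lt_compat, INR_fact_lt_0. Qed.

Lemma c_nonneg t n : 0 <= Rabs t ^ n / INR (fact n).
Proof. unfold Rdiv. apply Rmult_le_pos. apply pow_le, Rabs_pos. left; apply fact_inv_pos. Qed.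

Lemma Sf0 p : Sf 0 p 0 = cos p * (exp 1 - 1).
Proof.
  apply (uniqueness_sum (term p 0 0)). apply Sf_spec.
  eapply is_ext; [|apply (is_scal_l _ _ (cos p) bnd_is)].
  intros k. unfold term, bnd. simpl INR. simpl pow. unfold Rdiv.
  replace (0 * / (2 * 2 ^ k) + 0 * (PI * / 2) + p) with p by ring. rewrite Rinv_1. ring.
Qed.

Lemma abs_a_bound p n t k x : Rabs (term p n t k * x) <= bnd k * Rabs x.
Proof.
  rewrite Rabs_mult. apply Rmult_le_compat_r. apply Rabs_pos. apply term_bound1.
Qed.

Lemma taylor p t : infinite_sum (fun n => Sf n p 0 / INR (fact n) * t ^ n) (Sf 0 p t).
Proof.
  apply (exchange (fun k n => term p n 0 k * (/ INR (fact n) * t ^ n)) bnd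
                  (fun n => Rabs t ^ n / INR (fact n)) (fun k => term p 0 t k) _ (exp 1 - 1) (exp (Rabs t))).
  - intros k n. eapply Rle_trans; [apply abs_a_bound|]. right. f_equal.
    rewrite Rabs_mult, RPow_abs. rewrite Rabs_right by (left; apply fact_inv_pos). unfold Rdiv; ring.
  - intros; apply c_nonneg.
  - apply bnd_pos.
  - apply bnd_is.
  - apply exp_is.
  - intros k. set (c := 2 ^ S k). assert (Hc : 0 < c) by (apply pow_lt; lra).
    assert (H := is_scal _ _ (bnd k) (trig_taylor p (t / c))).
    eapply is_ext; [|replace (term p 0 t k) with (cos (p + t / c) * bnd k); [exact H|]].
    + intros n. cbv beta. unfold term. fold c. unfold Rdiv. rewrite Rpow_mult_distr, pow_inv.
      replace (0 * / c + INR n * (PI * / 2) + p) with (p + INR n * (PI * / 2)) by ring.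
      unfold bnd. ring.
    + unfold term, bnd. fold c. change (INR 0) with 0. rewrite pow_O. unfold Rdiv. rewrite Rinv_1.
      replace (t * / c + 0 * (PI * / 2) + p) with (p + t * / c) by ring. ring.
  - intros n. replace (Sf n p 0 / INR (fact n) * t ^ n) with (Sf n p 0 * (/ INR (fact n) * t ^ n)) by (unfold Rdiv; ring).
    apply (is_scal _ _ (/ INR (fact n) * t ^ n) (Sf_spec n p 0)).
  - apply Sf_spec.
Qed.

Lemma hat p t : infinite_sum (fun n => (-1) ^ n / INR (fact n) * t ^ n * Sf n p t) (Sf 0 p 0).
Proof.
  apply (exchange (fun k n => term p n t k * ((-1) ^ n / INR (fact n) * t ^ n)) bnd
                  (fun n => Rabs t ^ n / INR (fact n)) (fun k => cos p * bnd k) _ (exp 1 - 1) (exp (Rabs t))).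
  - intros k n. eapply Rle_trans; [apply abs_a_bound|]. right. f_equal.
    unfold Rdiv. rewrite !Rabs_mult, RPow_abs. rewrite pow_1_abs, (Rabs_right (/ INR (fact n))) by (left; apply fact_inv_pos). ring.
  - intros; apply c_nonneg.
  - apply bnd_pos.
  - apply bnd_is.
  - apply exp_is.
  - intros k. set (c := 2 ^ S k). assert (Hc : 0 < c) by (apply pow_lt; lra).
    assert (H := is_scal _ _ (bnd k) (trig_taylor (t / c + p) (- (t / c)))).
    eapply is_ext; [|replace (cos p * bnd k) with (cos (t / c + p + - (t / c)) * bnd k); [exact H|]].
    + intros n. cbv beta. unfold term. fold c. unfold Rdiv.
      replace (- (t * / c)) with (-1 * t * / c) by ring.
      rewrite !Rpow_mult_distr, pow_inv.
      replace (t * / c + p + INR n * (PI * / 2)) with (t * / c + INR n * (PI * / 2) + p) by ring.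
      unfold bnd. ring.
    + f_equal. f_equal. ring.
  - intros n. replace ((-1) ^ n / INR (fact n) * t ^ n * Sf n p t) with (Sf n p t * ((-1) ^ n / INR (fact n) * t ^ n)) by ring.
    apply (is_scal _ _ _ (Sf_spec n p t)).
  - rewrite Sf0. rewrite Rmult_comm. eapply is_ext; [|apply (is_scal _ _ (cos p) bnd_is)].
    intros; cbv beta; ring.
Qed.

Lemma cmod_le a b : cmod a b <= Rabs a + Rabs b.
Proof.
  unfold cmod. assert (0 <= Rabs a) by apply Rabs_pos. assert (0 <= Rabs b) by apply Rabs_pos.
  rewrite <- (sqrt_pow2 (Rabs a + Rabs b)) by lra. apply sqrt_le_1_alt.
  rewrite <- (pow2_abs a), <- (pow2_abs b). nra.
Qed.

Theorem mainTheorem17 :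
  forall fr fi : R -> R,
    (forall t : R, infinite_sum (f_re_term t) (fr t)) ->
    (forall t : R, infinite_sum (f_im_term t) (fi t)) ->
    exists Dr Di : nat -> R -> R,
      Dr 0%nat = fr /\ Di 0%nat = fi /\
      derivative_tower Dr /\ derivative_tower Di /\
      (forall r : R, exists l : R,
          infinite_sum (fun n => cmod (Dr n 0) (Di n 0) / INR (fact n) * r ^ n) l) /\
      (forall t : R,
          infinite_sum (fun n => Dr n 0 / INR (fact n) * t ^ n) (fr t) /\
          infinite_sum (fun n => Di n 0 / INR (fact n) * t ^ n) (fi t)) /\
      fr 0 = exp 1 - 1 /\ fi 0 = 0 /\
      (forall t : R,
          infinite_sum (fun n => (-1) ^ n / INR (fact n) * t ^ n * Dr n t) (fr 0) /\
          infinite_sum (fun n => (-1) ^ n / INR (fact n) * t ^ n * Di n t) (fi 0)).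
Proof.
  intros fr fi Hr Hi.
  assert (Er : Sf 0 0 = fr).
  { apply functional_extensionality. intros t. apply (uniqueness_sum (term 0 0 t)). apply Sf_spec.
    eapply is_ext; [|apply Hr]. intros k. unfold f_re_term, term.
    change (INR 0) with 0. rewrite pow_O. unfold Rdiv. rewrite Rinv_1, Rmult_1_r. f_equal. f_equal. ring. }
  assert (Ei : Sf 0 (- (PI / 2)) = fi).
  { apply functional_extensionality. intros t. apply (uniqueness_sum (term (- (PI / 2)) 0 t)). apply Sf_spec.
    eapply is_ext; [|apply Hi]. intros k. unfold f_im_term, term.
    change (INR 0) with 0. rewrite pow_O. unfold Rdiv. rewrite Rinv_1. rewrite Rmult_1_r. f_equal.
    rewrite <- cos_shift, <- cos_neg. f_equal. unfold Rdiv. ring. all: idtac. }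
  exists (fun n => Sf n 0), (fun n => Sf n (- (PI / 2))).
  rewrite <- Er, <- Ei.
  split; [reflexivity|]. split; [reflexivity|].
  split; [intros n t; apply Sf_deriv|]. split; [intros n t; apply Sf_deriv|].
  split.
  { intros r. apply (is_compare _ (fun n => (2 * (exp 1 - 1)) * (Rabs r ^ n / INR (fact n))) (2 * (exp 1 - 1) * exp (Rabs r))).
    - intros n. unfold Rdiv. rewrite !Rabs_mult, RPow_abs.
      assert (H1 := cmod_le (Sf n 0 0) (Sf n (- (PI / 2)) 0)).
      assert (H2 := Sf_bound n 0 0). assert (H3 := Sf_bound n (- (PI / 2)) 0).
      assert (H0 : 0 <= cmod (Sf n 0 0) (Sf n (- (PI / 2)) 0)) by apply sqrt_pos.
      rewrite (Rabs_right (cmod _ _)) by lra.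
      rewrite (Rabs_right (/ INR (fact n))) by (left; apply fact_inv_pos).
      assert (0 <= / INR (fact n) * Rabs (r ^ n)) by (apply Rmult_le_pos; [left; apply fact_inv_pos|apply Rabs_pos]).
      assert (0 <= (2 * (exp 1 - 1) - cmod (Sf n 0 0) (Sf n (- (PI / 2)) 0)) * (/ INR (fact n) * Rabs (r ^ n))).
      { apply Rmult_le_pos; auto. lra. }
      nra.
    - apply is_scal_l. apply exp_is. }
  split; [intros t; split; apply taylor|].
  split; [rewrite Sf0, cos_0; ring|]. split; [rewrite Sf0, cos_neg, cos_PI2; ring|].
  intros t; split; apply hat.
Qed.
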